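(* Fix a labeling $P$. Let $c$ be a command, $\rho,\mu$ states and $\beta$ a boolean such that $|a|_\mu>0$ for every array $a$, $\mathtt b\notin\mathrm{UsedVars}(c)$, and $\rho(\mathtt b)=\mathrm{nat}(\beta)$. If $\langle\mathrm{FiSLH}_P(c),\rho,\mu,\beta\rangle\xrightarrow[D]{O}{}^*\langle c',\rho',\mu',\beta'\rangle$ in the speculative semantics, then there exists $c''$ such that $\langle c,\rho,\mu,\beta\rangle\xrightarrow[D]{O}{}_i^*\langle c'',\rho'[\mathtt b\mapsto\rho(\mathtt b)],\mu',\beta'\rangle$ in the ideal semantics (w.r.t. $P$), and moreover if $c'=\mathtt{skip}$ then $c''=\mathtt{skip}$ and $\rho'(\mathtt b)=\mathrm{nat}(\beta')$.
   Context: Language AWhile: scalar variables $X\in\mathcal V$, arrays $a\in\mathcal A$; $e::=n\mid X\mid\mathrm{op}_{\mathbb N}(e,\dots,e)\mid be\,?\,e_1:e_2$; $be::=\mathtt{true}\mid\mathtt{false}\mid\mathrm{cmp}(e,e)\mid\mathrm{op}_{\mathbb B}(be,\dots,be)$; $c::=\mathtt{skip}\mid X:=e\mid c_1;c_2\mid\mathtt{if}\ be\ \mathtt{then}\ c_1\ \mathtt{else}\ c_2\mid\mathtt{while}\ be\ \mathtt{do}\ c\mid X\leftarrow a[e]\mid a[e]\leftarrow e'$. Scalar state $\rho:\mathcal V\to\mathbb N$; array state $\mu$ with sizes $|a|_\mu$ and values $\mu(a)[i]$; $[\![\cdot]\!]_\rho$ pure evaluation; $\mathrm{nat}(\mathtt{true})=1$,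 $\mathrm{nat}(\mathtt{false})=0$; $\mathrm{UsedVars}(c)$ is the set of scalar variables in $c$; $\mathtt b$ is a reserved scalar variable. Speculative semantics: configurations $\langle c,\rho,\mu,\beta\rangle$; steps labelled by optional observation ($\mathrm{branch}(v)$, $\mathrm{read}(a,i)$, $\mathrm{write}(a,i)$) and optional directive ($\mathit{step},\mathit{force},\mathrm{load}(a',j),\mathrm{store}(a',j)$). $X:=e\to\mathtt{skip}$ with $\rho[X\mapsto[\![e]\!]_\rho]$; $c_1;c_2\to c_1';c_2$ whenever $c_1\to c_1'$ (same labels); $\mathtt{skip};c\to c$; $\mathtt{while}\ be\ \mathtt{do}\ c\to\mathtt{if}\ be\ \mathtt{then}\ (c;\mathtt{while}\ be\ \mathtt{do}\ c)\ \mathtt{else}\ \mathtt{skip}$ (no obs/directive, flag kept). Conditional with $\mathit{step}$: go to branch $v=[\![be]\!]_\rho$; with $\mathit{force}$: go to branch $\neg v$, set $\beta:=\mathtt{true}$; obs $\mathrm{branch}(v)$. Read $X\leftarrow a[ie]$ with $\mathit{step}$: $i=[\![ie]\!]_\rho<|a|_\mu$, $X:=\mu(a)[i]$; with $\mathrm{load}(a',j)$: requires $\beta=\mathtt{true}$, $i\ge|a|_\mu$, $j<|a'|_\mu$, $X:=\mu(a')[j]$; obs $\mathrm{read}(a,i)$. Write $a[ie]\leftarrow ae$ with $\mathit{step}$: $i<|a|_\mu$, $\mu[a[i]\mapsto[\![ae]\!]_\rho]$; with $\mathrm{store}(a',j)$: requires $\beta=\mathtt{true}$, $i\ge|a|_\mu$,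 $j<|a'|_\mu$, $\mu[a'[j]\mapsto[\![ae]\!]_\rho]$; obs $\mathrm{write}(a,i)$. Multi-step $\xrightarrow[D]{O}{}^*$ collects directive list $D$ and observation list $O$. Labels: $\mathtt{true}$=public, $\mathtt{false}$=secret; $P(e)$, $P(be)$ public iff all variables in it are public under $P:\mathcal V\to$ labels. Ideal semantics (w.r.t. $P$), $\xrightarrow[d]{o}{}_i$: identical to the speculative semantics except: conditional rules (both $\mathit{step}$ and $\mathit{force}$) use $v=(P(be)\vee\neg\beta)\wedge[\![be]\!]_\rho$ in place of $[\![be]\!]_\rho$ (both for the chosen branch and the observation); read with $\mathit{step}$ uses index $i=0$ if $(P(ie)=\mathtt{false}\vee P(X)=\mathtt{true})\wedge\beta$ and $i=[\![ie]\!]_\rho$ otherwise; read with $\mathrm{load}$ additionally requires $P(ie)=\mathtt{true}$ and $P(X)=\mathtt{false}$; write with $\mathit{step}$ uses $i=0$ if $(P(ie)=\mathtt{false}\vee P(ae)=\mathtt{false})\wedge\beta$ and $i=[\![ie]\!]_\rho$ otherwise; write with $\mathrm{store}$ additionally requires $P(ie)=\mathtt{true}$ and $P(ae)=\mathtt{true}$. Multi-step $\xrightarrow[D]{O}{}_i^*$ as before. Transformation $\mathrm{FiSLH}_P$: with $m(i)=(\mathtt b==1)\,?\,0:i$ and $B(be)=(\mathtt b==0\ \&\&\ be)$ if $P(be)=\mathtt{false}$, else $be$: $\mathtt{skip}\mapsto\mathtt{skip}$; $X:=e\mapsto X:=e$; $c_1;c_2\mapsto$ translations sequenced; $\mathtt{if}\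 be\ \mathtt{then}\ c_1\ \mathtt{else}\ c_2\mapsto\mathtt{if}\ B(be)\ \mathtt{then}\ (\mathtt b:=B(be)\,?\,\mathtt b:1;[\![c_1]\!])\ \mathtt{else}\ (\mathtt b:=B(be)\,?\,1:\mathtt b;[\![c_2]\!])$; $\mathtt{while}\ be\ \mathtt{do}\ c\mapsto(\mathtt{while}\ B(be)\ \mathtt{do}\ (\mathtt b:=B(be)\,?\,\mathtt b:1;[\![c]\!]));\ \mathtt b:=B(be)\,?\,1:\mathtt b$; $X\leftarrow a[i]\mapsto X\leftarrow a[m(i)]$ if $P(X)=\mathtt{true}$ or $P(i)=\mathtt{false}$, else unchanged; $a[i]\leftarrow e\mapsto a[m(i)]\leftarrow e$ if $P(e)=\mathtt{false}$ or $P(i)=\mathtt{false}$, else unchanged. *)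

(* Defs.v *)
From Stdlib Require Import String List Bool Arith.
Import ListNotations.
Open Scope string_scope.

Definition var := string.
Definition arr := string.

Inductive aexp : Type :=
  | ANum (n : nat)
  | AId (X : var)
  | AOp (f : list nat -> nat) (args : list aexp)
  | ACTIf (be : bexp) (e1 e2 : aexp)
with bexp : Type :=
  | BTrue
  | BFalse
  | BCmp (f : nat -> nat -> bool) (e1 e2 : aexp)
  | BOp (f : list bool -> bool) (args : list bexp).

Inductive com : Type :=
  | Skip
  | Asgn (X : var) (e : aexp)
  | Seq (c1 c2 : com)
  | If (be : bexp) (c1 c2 : com)
  | While (be : bexp) (c : com)
  | ARead (X : var) (a : arr) (i : aexp)
  | AWrite (a : arr) (i : aexp) (e : aexp).

Definition reg := var -> nat.
Definition mem := arr -> list nat.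

Definition upd_reg (r : reg) (X : var) (n : nat) : reg :=
  fun Y => if String.eqb X Y then n else r Y.
Definition upd_mem (m : mem) (a : arr) (i n : nat) : mem :=
  fun b => if String.eqb a b then
             (firstn i (m a) ++ n :: skipn (S i) (m a))%list else m b.
Definition asize (m : mem) (a : arr) : nat := length (m a).
Definition aget (m : mem) (a : arr) (i : nat) : nat := nth i (m a) 0.

Fixpoint aeval (r : reg) (e : aexp) : nat :=
  match e with
  | ANum n => n
  | AId X => r X
  | AOp f args => f (map (aeval r) args)
  | ACTIf be e1 e2 => if beval r be then aeval r e1 else aeval r e2
  end
with beval (r : reg) (be : bexp) : bool :=
  match be with
  | BTrue => true
  | BFalse => false
  | BCmp f e1 e2 => f (aeval r e1) (aeval r e2)
  | BOp f args => f (map (beval r) args)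
  end.

Definition nat_of_bool (b : bool) : nat := if b then 1 else 0.

Fixpoint avars (e : aexp) : list var :=
  match e with
  | ANum _ => []
  | AId X => [X]
  | AOp _ args => flat_map avars args
  | ACTIf be e1 e2 => bvars be ++ avars e1 ++ avars e2
  end
with bvars (be : bexp) : list var :=
  match be with
  | BTrue | BFalse => []
  | BCmp _ e1 e2 => avars e1 ++ avars e2
  | BOp _ args => flat_map bvars args
  end.

Fixpoint used_vars (c : com) : list var :=
  match c with
  | Skip => []
  | Asgn X e => X :: avars e
  | Seq c1 c2 => used_vars c1 ++ used_vars c2
  | If be c1 c2 => bvars be ++ used_vars c1 ++ used_vars c2
  | While be c => bvars be ++ used_vars c
  | ARead X _ i => X :: avars i
  | AWrite _ i e => avars i ++ avars e
  end.

(* the reserved misspeculation-flag variable b *)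
Definition msf : var := "b".

(* labels: true = public, false = secret *)
Definition label := bool.
Definition pub_map := var -> label.
Definition label_of_aexp (P : pub_map) (e : aexp) : label := forallb P (avars e).
Definition label_of_bexp (P : pub_map) (be : bexp) : label := forallb P (bvars be).

Inductive observation : Type :=
  | OBranch (v : bool)
  | ORead (a : arr) (i : nat)
  | OWrite (a : arr) (i : nat).
Inductive direction : Type :=
  | DStep
  | DForce
  | DLoad (a : arr) (j : nat)
  | DStore (a : arr) (j : nat).

Definition config : Type := (com * reg * mem * bool)%type.

Inductive spec_step : config -> list direction -> list observation -> config -> Prop :=
  | SP_Asgn : forall X e r m b,
      spec_step (Asgn X e, r, m, b) [] [] (Skip, upd_reg r X (aeval r e), m, b)
  | SP_Seq : forall c1 c1' c2 r m b r' m' b' ds os,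
      spec_step (c1, r, m, b) ds os (c1', r', m', b') ->
      spec_step (Seq c1 c2, r, m, b) ds os (Seq c1' c2, r', m', b')
  | SP_SeqSkip : forall c r m b,
      spec_step (Seq Skip c, r, m, b) [] [] (c, r, m, b)
  | SP_While : forall be c r m b,
      spec_step (While be c, r, m, b) [] []
                (If be (Seq c (While be c)) Skip, r, m, b)
  | SP_If : forall be c1 c2 r m b,
      spec_step (If be c1 c2, r, m, b) [DStep] [OBranch (beval r be)]
                (if beval r be then c1 else c2, r, m, b)
  | SP_If_F : forall be c1 c2 r m b,
      spec_step (If be c1 c2, r, m, b) [DForce] [OBranch (beval r be)]
                (if beval r be then c2 else c1, r, m, true)
  | SP_Read : forall X a ie r m b i,
      i = aeval r ie -> i < asize m a ->
      spec_step (ARead X a ie, r, m, b) [DStep] [ORead a i]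
                (Skip, upd_reg r X (aget m a i), m, b)
  | SP_Read_U : forall X a ie r m i a' j,
      i = aeval r ie -> asize m a <= i -> j < asize m a' ->
      spec_step (ARead X a ie, r, m, true) [DLoad a' j] [ORead a i]
                (Skip, upd_reg r X (aget m a' j), m, true)
  | SP_Write : forall a ie e r m b i,
      i = aeval r ie -> i < asize m a ->
      spec_step (AWrite a ie e, r, m, b) [DStep] [OWrite a i]
                (Skip, r, upd_mem m a i (aeval r e), b)
  | SP_Write_U : forall a ie e r m i a' j,
      i = aeval r ie -> asize m a <= i -> j < asize m a' ->
      spec_step (AWrite a ie e, r, m, true) [DStore a' j] [OWrite a i]
                (Skip, r, upd_mem m a' j (aeval r e), true).

Inductive spec_multi : config -> list direction -> list observation -> config -> Prop :=
  | SM_Refl : forall cf, spec_multi cf [] [] cf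
  | SM_Trans : forall cf1 cf2 cf3 ds1 os1 ds2 os2,
      spec_step cf1 ds1 os1 cf2 ->
      spec_multi cf2 ds2 os2 cf3 ->
      spec_multi cf1 ((ds1 ++ ds2)%list) ((os1 ++ os2)%list) cf3.

Inductive ideal_step (P : pub_map) : config -> list direction -> list observation -> config -> Prop :=
  | ID_Asgn : forall X e r m b,
      ideal_step P (Asgn X e, r, m, b) [] [] (Skip, upd_reg r X (aeval r e), m, b)
  | ID_Seq : forall c1 c1' c2 r m b r' m' b' ds os,
      ideal_step P (c1, r, m, b) ds os (c1', r', m', b') ->
      ideal_step P (Seq c1 c2, r, m, b) ds os (Seq c1' c2, r', m', b')
  | ID_SeqSkip : forall c r m b,
      ideal_step P (Seq Skip c, r, m, b) [] [] (c, r, m, b)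
  | ID_While : forall be c r m b,
      ideal_step P (While be c, r, m, b) [] []
                 (If be (Seq c (While be c)) Skip, r, m, b)
  | ID_If : forall be c1 c2 r m b v,
      v = (label_of_bexp P be || negb b) && beval r be ->
      ideal_step P (If be c1 c2, r, m, b) [DStep] [OBranch v]
                 (if v then c1 else c2, r, m, b)
  | ID_If_F : forall be c1 c2 r m b v,
      v = (label_of_bexp P be || negb b) && beval r be ->
      ideal_step P (If be c1 c2, r, m, b) [DForce] [OBranch v]
                 (if v then c2 else c1, r, m, true)
  | ID_Read : forall X a ie r m b i,
      i = (if (negb (label_of_aexp P ie) || P X) && b then 0 else aeval r ie) ->
      i < asize m a ->
      ideal_step P (ARead X a ie, r, m, b) [DStep] [ORead a i]
                 (Skip, upd_reg r X (aget m a i), m, b)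
  | ID_Read_U : forall X a ie r m i a' j,
      i = aeval r ie -> asize m a <= i -> j < asize m a' ->
      label_of_aexp P ie = true -> P X = false ->
      ideal_step P (ARead X a ie, r, m, true) [DLoad a' j] [ORead a i]
                 (Skip, upd_reg r X (aget m a' j), m, true)
  | ID_Write : forall a ie e r m b i,
      i = (if (negb (label_of_aexp P ie) || negb (label_of_aexp P e)) && b
           then 0 else aeval r ie) ->
      i < asize m a ->
      ideal_step P (AWrite a ie e, r, m, b) [DStep] [OWrite a i]
                 (Skip, r, upd_mem m a i (aeval r e), b)
  | ID_Write_U : forall a ie e r m i a' j,
      i = aeval r ie -> asize m a <= i -> j < asize m a' ->
      label_of_aexp P ie = true -> label_of_aexp P e = true ->
      ideal_step P (AWrite a ie e, r, m, true) [DStore a' j] [OWrite a i]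
                 (Skip, r, upd_mem m a' j (aeval r e), true).

Inductive ideal_multi (P : pub_map) : config -> list direction -> list observation -> config -> Prop :=
  | IM_Refl : forall cf, ideal_multi P cf [] [] cf
  | IM_Trans : forall cf1 cf2 cf3 ds1 os1 ds2 os2,
      ideal_step P cf1 ds1 os1 cf2 ->
      ideal_multi P cf2 ds2 os2 cf3 ->
      ideal_multi P cf1 ((ds1 ++ ds2)%list) ((os1 ++ os2)%list) cf3.

Definition BAnd (b1 b2 : bexp) : bexp :=
  BOp (fun l => match l with [x; y] => x && y | _ => false end) [b1; b2].
Definition BEqN (e1 e2 : aexp) : bexp := BCmp Nat.eqb e1 e2.

Definition mask_idx (i : aexp) : aexp := ACTIf (BEqN (AId msf) (ANum 1)) (ANum 0) i.
Definition guard (P : pub_map) (be : bexp) : bexp :=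
  if label_of_bexp P be then be else BAnd (BEqN (AId msf) (ANum 0)) be.

Fixpoint fislh (P : pub_map) (c : com) : com :=
  match c with
  | Skip => Skip
  | Asgn X e => Asgn X e
  | Seq c1 c2 => Seq (fislh P c1) (fislh P c2)
  | If be c1 c2 =>
      If (guard P be)
         (Seq (Asgn msf (ACTIf (guard P be) (AId msf) (ANum 1))) (fislh P c1))
         (Seq (Asgn msf (ACTIf (guard P be) (ANum 1) (AId msf))) (fislh P c2))
  | While be c =>
      Seq (While (guard P be)
                 (Seq (Asgn msf (ACTIf (guard P be) (AId msf) (ANum 1))) (fislh P c)))
          (Asgn msf (ACTIf (guard P be) (ANum 1) (AId msf)))
  | ARead X a i =>
      if P X || negb (label_of_aexp P i) then ARead X a (mask_idx i) else ARead X a i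
  | AWrite a i e =>
      if negb (label_of_aexp P e) || negb (label_of_aexp P i)
      then AWrite a (mask_idx i) e else AWrite a i e
  end.

(* Main.v *)
Require Import Defs.
From Stdlib Require Import String List Bool Arith Lia FunctionalExtensionality.
Import ListNotations.

Fixpoint aeval_agree (r1 r2 : reg) (e : aexp) {struct e} :
  (forall x, In x (avars e) -> r1 x = r2 x) -> aeval r1 e = aeval r2 e
with beval_agree (r1 r2 : reg) (b : bexp) {struct b} :
  (forall x, In x (bvars b) -> r1 x = r2 x) -> beval r1 b = beval r2 b.
Proof.
  - destruct e as [n|X|f args|be e1 e2]; simpl; intros H.
    + reflexivity.
    + apply H; left; reflexivity.
    + f_equal. induction args as [|a l IH]; simpl in *.
      * reflexivity.
      * f_equal.
        -- apply aeval_agree. intros x Hx. apply H. apply in_or_app. left; exact Hx.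
        -- apply IH. intros x Hx. apply H. apply in_or_app. right; exact Hx.
    + rewrite (beval_agree r1 r2 be), (aeval_agree r1 r2 e1), (aeval_agree r1 r2 e2);
        [reflexivity| | |]; intros x Hx; apply H; rewrite !in_app_iff; tauto.
  - destruct b as [| |f e1 e2|f args]; simpl; intros H.
    + reflexivity.
    + reflexivity.
    + rewrite (aeval_agree r1 r2 e1), (aeval_agree r1 r2 e2); [reflexivity| |];
        intros x Hx; apply H; rewrite !in_app_iff; tauto.
    + f_equal. induction args as [|a l IH]; simpl in *.
      * reflexivity.
      * f_equal.
        -- apply beval_agree. intros x Hx. apply H. apply in_or_app. left; exact Hx.
        -- apply IH. intros x Hx. apply H. apply in_or_app. right; exact Hx.
Qed.

Lemma upd_reg_eq r x v : upd_reg r x v x = v.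
Proof. unfold upd_reg. rewrite String.eqb_refl. reflexivity. Qed.
Lemma upd_reg_neq r x y v : x <> y -> upd_reg r x v y = r y.
Proof. intros H. unfold upd_reg. apply String.eqb_neq in H. rewrite H. reflexivity. Qed.
Lemma upd_reg_shadow r x v w : upd_reg (upd_reg r x v) x w = upd_reg r x w.
Proof. extensionality y. unfold upd_reg. destruct (String.eqb x y); auto. Qed.
Lemma upd_reg_comm r x y v w : x <> y ->
  upd_reg (upd_reg r x v) y w = upd_reg (upd_reg r y w) x v.
Proof.
  intros H. extensionality z. unfold upd_reg.
  destruct (String.eqb_spec y z); destruct (String.eqb_spec x z); subst; auto.
  congruence.
Qed.
Lemma upd_reg_same r x : upd_reg r x (r x) = r.
Proof. extensionality y. unfold upd_reg. destruct (String.eqb_spec x y); subst; auto. Qed.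

Lemma aeval_upd_notin r x v e : ~ In x (avars e) -> aeval (upd_reg r x v) e = aeval r e.
Proof.
  intros H. apply aeval_agree. intros y Hy. apply upd_reg_neq. intro; subst; auto.
Qed.
Lemma beval_upd_notin r x v e : ~ In x (bvars e) -> beval (upd_reg r x v) e = beval r e.
Proof.
  intros H. apply beval_agree. intros y Hy. apply upd_reg_neq. intro; subst; auto.
Qed.

Lemma guard_eval P k be rs b : rs msf = nat_of_bool b -> ~ In msf (bvars be) ->
  beval rs (guard P be) = (label_of_bexp P be || negb b) && beval (upd_reg rs msf k) be.
Proof.
  intros Hs Hn. rewrite beval_upd_notin by exact Hn. unfold guard.
  destruct (label_of_bexp P be); simpl; auto.
  rewrite Hs. destruct b; reflexivity.
Qed.

Lemma mask_eval rs b i : rs msf = nat_of_bool b ->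
  aeval rs (mask_idx i) = if b then 0 else aeval rs i.
Proof. intros Hs. simpl. rewrite Hs. destruct b; reflexivity. Qed.

Lemma asize_upd m a j n c : j < asize m a -> asize (upd_mem m a j n) c = asize m c.
Proof.
  unfold asize, upd_mem. intros H. destruct (String.eqb_spec a c); subst; auto.
  rewrite length_app, length_firstn. cbn [length]. rewrite length_skipn. lia.
Qed.

Definition istep01 P (cf : config) ds os cf' :=
  ideal_step P cf ds os cf' \/ (ds = [] /\ os = [] /\ cf = cf').

Lemma istep01_seq P c1 c1' c2 r m b r' m' b' ds os :
  istep01 P (c1, r, m, b) ds os (c1', r', m', b') ->
  istep01 P (Seq c1 c2, r, m, b) ds os (Seq c1' c2, r', m', b').
Proof.
  intros [H|(->&->&H)].
  - left. constructor. exact H.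
  - right. injection H; intros; subst. auto.
Qed.

Notation A1 P be := (Asgn msf (ACTIf (guard P be) (AId msf) (ANum 1))).
Notation A2 P be := (Asgn msf (ACTIf (guard P be) (ANum 1) (AId msf))).

Inductive rel (P : pub_map) : com -> com -> reg -> bool -> Prop :=
| R_Skip : forall rs b, rs msf = nat_of_bool b -> rel P Skip Skip rs b
| R_Asgn : forall X e rs b, X <> msf -> ~ In msf (avars e) -> rs msf = nat_of_bool b ->
    rel P (Asgn X e) (Asgn X e) rs b
| R_If : forall be c1 c2 rs b, ~ In msf (bvars be) -> ~ In msf (used_vars c1) ->
    ~ In msf (used_vars c2) -> rs msf = nat_of_bool b ->
    rel P (If (guard P be) (Seq (A1 P be) (fislh P c1)) (Seq (A2 P be) (fislh P c2)))
          (If be c1 c2) rs b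
| R_Then : forall be c rs b, ~ In msf (used_vars c) ->
    nat_of_bool b = (if beval rs (guard P be) then rs msf else 1) ->
    rel P (Seq (A1 P be) (fislh P c)) c rs b
| R_Else : forall be c rs b, ~ In msf (used_vars c) ->
    nat_of_bool b = (if beval rs (guard P be) then 1 else rs msf) ->
    rel P (Seq (A2 P be) (fislh P c)) c rs b
| R_Pre : forall c rs b, ~ In msf (used_vars c) -> rs msf = nat_of_bool b ->
    rel P (Seq Skip (fislh P c)) c rs b
| R_Seq : forall cs1 ci1 c2 rs b, rel P cs1 ci1 rs b -> ~ In msf (used_vars c2) ->
    rel P (Seq cs1 (fislh P c2)) (Seq ci1 c2) rs b
| R_While : forall be c rs b, ~ In msf (bvars be) -> ~ In msf (used_vars c) ->
    rs msf = nat_of_bool b ->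
    rel P (Seq (While (guard P be) (Seq (A1 P be) (fislh P c))) (A2 P be)) (While be c) rs b
| R_WIf : forall be c rs b, ~ In msf (bvars be) -> ~ In msf (used_vars c) ->
    rs msf = nat_of_bool b ->
    rel P (Seq (If (guard P be)
                   (Seq (Seq (A1 P be) (fislh P c)) (While (guard P be) (Seq (A1 P be) (fislh P c))))
                   Skip) (A2 P be))
          (If be (Seq c (While be c)) Skip) rs b
| R_WBody : forall cs1 ci1 be c rs b, rel P cs1 ci1 rs b -> ~ In msf (bvars be) ->
    ~ In msf (used_vars c) ->
    rel P (Seq (Seq cs1 (While (guard P be) (Seq (A1 P be) (fislh P c)))) (A2 P be))
          (Seq ci1 (While be c)) rs b
| R_WExit1 : forall be rs b,
    nat_of_bool b = (if beval rs (guard P be) then 1 else rs msf) ->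
    rel P (Seq Skip (A2 P be)) Skip rs b
| R_WExit2 : forall be rs b,
    nat_of_bool b = (if beval rs (guard P be) then 1 else rs msf) ->
    rel P (A2 P be) Skip rs b
| R_ReadM : forall X a i rs b, X <> msf -> ~ In msf (avars i) -> rs msf = nat_of_bool b ->
    P X || negb (label_of_aexp P i) = true ->
    rel P (ARead X a (mask_idx i)) (ARead X a i) rs b
| R_ReadU : forall X a i rs b, X <> msf -> ~ In msf (avars i) -> rs msf = nat_of_bool b ->
    P X = false -> label_of_aexp P i = true ->
    rel P (ARead X a i) (ARead X a i) rs b
| R_WriteM : forall a i e rs b, ~ In msf (avars i) -> ~ In msf (avars e) ->
    rs msf = nat_of_bool b ->
    negb (label_of_aexp P e) || negb (label_of_aexp P i) = true ->
    rel P (AWrite a (mask_idx i) e) (AWrite a i e) rs b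
| R_WriteU : forall a i e rs b, ~ In msf (avars i) -> ~ In msf (avars e) ->
    rs msf = nat_of_bool b ->
    label_of_aexp P e = true -> label_of_aexp P i = true ->
    rel P (AWrite a i e) (AWrite a i e) rs b.

Lemma sync P : forall c rs b, ~ In msf (used_vars c) -> rs msf = nat_of_bool b ->
  rel P (fislh P c) c rs b.
Proof.
  induction c; simpl; intros rs b0 Hn Hs; rewrite ?in_app_iff in Hn.
  - constructor; auto.
  - constructor; auto.
  - constructor; auto.
  - constructor; auto.
  - constructor; auto.
  - destruct (P X || negb (label_of_aexp P i)) eqn:E.
    + constructor; auto.
    + apply orb_false_iff in E. destruct E as [E1 E2].
      apply R_ReadU; auto. destruct (label_of_aexp P i); auto.
  - destruct (negb (label_of_aexp P e) || negb (label_of_aexp P i)) eqn:E.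
    + constructor; auto.
    + apply orb_false_iff in E. destruct E as [E1 E2].
      apply R_WriteU; auto.
      * destruct (label_of_aexp P e); auto.
      * destruct (label_of_aexp P i); auto.
Qed.

Lemma rel_skip P ci rs b : rel P Skip ci rs b -> ci = Skip /\ rs msf = nat_of_bool b.
Proof. intros H. inversion H; subst; auto. Qed.

Ltac fixnames :=
  match goal with |- exists _, istep01 _ (_, upd_reg ?R _ _, ?M, ?B) _ _ _ /\ _ =>
    try rename R into rs; try rename M into m; try rename B into b end.
Ltac inv H := inversion H; subst; try fixnames.

Lemma step_sim P k : forall cs ci rs b, rel P cs ci rs b ->
  forall m ds os cs' rs' m' b', (forall a, 0 < asize m a) ->
  spec_step (cs, rs, m, b) ds os (cs', rs', m', b') ->
  exists ci', istep01 P (ci, upd_reg rs msf k, m, b) ds os (ci', upd_reg rs' msf k, m', b')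
    /\ rel P cs' ci' rs' b' /\ (forall a, 0 < asize m' a).
Proof.
  intros cs ci rs b Hr. induction Hr; intros m ds os cs' rs' m' b' Hpos Hs.
  - inversion Hs.
  - inv Hs. exists Skip. split; [|split; auto].
    + left. rewrite upd_reg_comm by auto.
      rewrite <- (aeval_upd_notin rs msf k e) by auto. constructor.
    + constructor. rewrite upd_reg_neq; auto.
  - inv Hs.
    + exists (if beval rs (guard P be) then c1 else c2). split; [|split; auto].
      * left. apply ID_If. apply guard_eval; auto.
      * destruct (beval rs (guard P be)) eqn:Hv.
        -- apply R_Then; auto; rewrite Hv; auto.
        -- apply R_Else; auto; rewrite Hv; auto.
    + exists (if beval rs (guard P be) then c2 else c1). split; [|split; auto].
      * left. apply ID_If_F. apply guard_eval; auto.
      * destruct (beval rs (guard P be)) eqn:Hv.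
        -- apply R_Else; auto; rewrite Hv; auto.
        -- apply R_Then; auto; rewrite Hv; auto.
  - inv Hs.
    match goal with H : spec_step _ _ _ _ |- _ => inv H end.
    exists c. split; [|split; auto].
    + right. rewrite upd_reg_shadow. auto.
    + apply R_Pre; auto; rewrite upd_reg_eq; simpl; auto.
  - inv Hs.
    match goal with H : spec_step _ _ _ _ |- _ => inv H end.
    exists c. split; [|split; auto].
    + right. rewrite upd_reg_shadow. auto.
    + apply R_Pre; auto; rewrite upd_reg_eq; simpl; auto.
  - inv Hs.
    + match goal with H : spec_step _ _ _ _ |- _ => inversion H end.
    + exists c. split; [|split; auto].
      * right. auto.
      * apply sync; auto.
  - inv Hs.
    + destruct (IHHr _ _ _ _ _ _ _ Hpos ltac:(eassumption)) as (ci1' & Hi & Hr' & Hp').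
      exists (Seq ci1' c2). split; [|split; auto].
      * apply istep01_seq; auto.
      * constructor; auto.
    + apply rel_skip in Hr. destruct Hr as [-> Hs'].
      exists c2. split; [|split; auto].
      * left. constructor.
      * apply sync; auto.
  - inv Hs.
    match goal with H : spec_step _ _ _ _ |- _ => inv H end.
    exists (If be (Seq c (While be c)) Skip). split; [|split; auto].
    + left. constructor.
    + constructor; auto.
  - inv Hs.
    match goal with H : spec_step _ _ _ _ |- _ => inv H end.
    + exists (if beval rs (guard P be) then Seq c (While be c) else Skip).
      split; [|split; auto].
      * left. apply ID_If. apply guard_eval; auto.
      * destruct (beval rs (guard P be)) eqn:Hv.
        -- apply R_WBody; auto. apply R_Then; auto; rewrite Hv; auto.
        -- apply R_WExit1; rewrite Hv; auto.
    + exists (if beval rs (guard P be) then Skip else Seq c (While be c)).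
      split; [|split; auto].
      * left. apply ID_If_F. apply guard_eval; auto.
      * destruct (beval rs (guard P be)) eqn:Hv.
        -- apply R_WExit1; rewrite Hv; auto.
        -- apply R_WBody; auto. apply R_Then; auto; rewrite Hv; auto.
  - inv Hs.
    match goal with H : spec_step _ _ _ _ |- _ => inv H end.
    + destruct (IHHr _ _ _ _ _ _ _ Hpos ltac:(eassumption)) as (ci1' & Hi & Hr' & Hp').
      exists (Seq ci1' (While be c)). split; [|split; auto].
      * apply istep01_seq; auto.
      * constructor; auto.
    + apply rel_skip in Hr. destruct Hr as [-> Hs'].
      exists (While be c). split; [|split; auto].
      * left. constructor.
      * constructor; auto.
  - inv Hs.
    + match goal with H : spec_step _ _ _ _ |- _ => inversion H end.
    + exists Skip. split; [|split; auto].
      * right. auto.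
      * apply R_WExit2; auto.
  - inv Hs.
    exists Skip. split; [|split; auto].
    + right. rewrite upd_reg_shadow. auto.
    + constructor. rewrite upd_reg_eq. simpl. auto.
  - inv Hs.
    + exists Skip. split; [|split; auto].
      * left. rewrite upd_reg_comm by auto. apply ID_Read; [|assumption].
        rewrite (mask_eval _ b) by assumption. rewrite aeval_upd_notin by auto.
        rewrite orb_comm.
        match goal with Hc : _ || _ = true |- _ => rewrite Hc end.
        destruct b; reflexivity.
      * constructor. rewrite upd_reg_neq; auto.
    + exfalso.
      match goal with Hl : asize _ _ <= _ |- _ =>
        rewrite (mask_eval _ true) in Hl by assumption end.
      specialize (Hpos a). lia.
  - inv Hs.
    + exists Skip. split; [|split; auto].
      * left. rewrite upd_reg_comm by auto. apply ID_Read; [|assumption].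
        rewrite aeval_upd_notin by auto.
        match goal with Hc : P _ = false |- _ => rewrite Hc end.
        match goal with Hc : label_of_aexp _ _ = true |- _ => rewrite Hc end.
        reflexivity.
      * constructor. rewrite upd_reg_neq; auto.
    + exists Skip. split; [|split; auto].
      * left. rewrite upd_reg_comm by auto. apply ID_Read_U; auto.
        symmetry. apply aeval_upd_notin; auto.
      * constructor. rewrite upd_reg_neq; auto.
  - inv Hs.
    + exists Skip. split; [|split].
      * left. rewrite <- (aeval_upd_notin rs msf k e) by auto.
        apply ID_Write; [|assumption].
        rewrite (mask_eval _ b) by assumption. rewrite aeval_upd_notin by auto.
        rewrite orb_comm.
        match goal with Hc : _ || _ = true |- _ => rewrite Hc end.
        destruct b; reflexivity.
      * constructor; auto.
      * intros a0. rewrite asize_upd; auto.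
    + exfalso.
      match goal with Hl : asize _ _ <= _ |- _ =>
        rewrite (mask_eval _ true) in Hl by assumption end.
      specialize (Hpos a). lia.
  - inv Hs.
    + exists Skip. split; [|split].
      * left. rewrite <- (aeval_upd_notin rs msf k e) by auto.
        apply ID_Write; [|assumption].
        rewrite aeval_upd_notin by auto.
        match goal with Hc : label_of_aexp _ e = true |- _ => rewrite Hc end.
        match goal with Hc : label_of_aexp _ i = true |- _ => rewrite Hc end.
        reflexivity.
      * constructor; auto.
      * intros a0. rewrite asize_upd; auto.
    + exists Skip. split; [|split].
      * left. rewrite <- (aeval_upd_notin rs msf k e) by auto.
        apply ID_Write_U; auto.
        symmetry. apply aeval_upd_notin; auto.
      * constructor; auto.
      * intros a0. rewrite asize_upd; auto.
Qed.

Lemma multi_sim P k : forall cf ds os cf', spec_multi cf ds os cf' ->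
  forall cs rs m b ci cs' rs' m' b', cf = (cs, rs, m, b) -> cf' = (cs', rs', m', b') ->
  rel P cs ci rs b -> (forall a, 0 < asize m a) ->
  exists ci', ideal_multi P (ci, upd_reg rs msf k, m, b) ds os (ci', upd_reg rs' msf k, m', b')
    /\ rel P cs' ci' rs' b'.
Proof.
  intros cf ds os cf' H. induction H as [cf|cf1 cf2 cf3 ds1 os1 ds2 os2 Hs Hm IH];
    intros cs rs m b ci cs' rs' m' b' E1 E2 Hr Hpos.
  - subst. injection E2; intros; subst. exists ci. split; auto. constructor.
  - subst. destruct cf2 as [[[c2 r2] m2] b2].
    destruct (step_sim P k _ _ _ _ Hr _ _ _ _ _ _ _ Hpos Hs) as (ci2 & Hi & Hr2 & Hp2).
    destruct (IH c2 r2 m2 b2 ci2 cs' rs' m' b' eq_refl eq_refl Hr2 Hp2) as (ci3 & Hm3 & Hr3).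
    exists ci3. split; auto.
    destruct Hi as [Hi|(-> & -> & Heq)].
    + econstructor; eauto.
    + simpl. rewrite Heq. exact Hm3.
Qed.

Theorem lemma5p1 :
  forall (P : pub_map) (c : com) (r : reg) (m : mem) (b : bool)
         (ds : list direction) (os : list observation)
         (c' : com) (r' : reg) (m' : mem) (b' : bool),
    (forall a : arr, 0 < asize m a) ->
    ~ In msf (used_vars c) ->
    r msf = nat_of_bool b ->
    spec_multi (fislh P c, r, m, b) ds os (c', r', m', b') ->
    exists c'' : com,
      ideal_multi P (c, r, m, b) ds os (c'', upd_reg r' msf (r msf), m', b')
      /\ (c' = Skip -> c'' = Skip /\ r' msf = nat_of_bool b').
Proof.
  intros P c r m b ds os c' r' m' b' Hpos Hn Hs Hm.
  destruct (multi_sim P (r msf) _ _ _ _ Hm (fislh P c) r m b c c' r' m' b'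
              eq_refl eq_refl (sync P c r b Hn Hs) Hpos) as (c'' & Hi & Hr).
  rewrite upd_reg_same in Hi.
  exists c''. split; auto.
  intros ->. apply rel_skip in Hr. exact Hr.
Qed.
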